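(* Let $G$ be a finite nonabelian group and let $N$ be a normal subgroup of $G$. Then either $K(G)\le N$, or both $N\le Z(G)$ and $Z(G/N)=Z(G)/N$.
   Context: All groups are finite. For $\chi\in\mathrm{Irr}(G)$, the center of $\chi$ is $Z(\chi)=\{g\in G : |\chi(g)|=\chi(1)\}$; equivalently $Z(\chi)/\ker(\chi)=Z(G/\ker(\chi))$. For a nonabelian group $G$, let $\mathcal{X}=\{\chi\in\mathrm{Irr}(G) : Z(\chi)>Z(G)\}$ (strict containment) and define $K(G)=\bigcap_{\chi\in\mathcal{X}}\ker(\chi)$. If $G$ is abelian, set $K(G)=G$. *)

(* Defs.v *)
From mathcomp Require Import all_boot all_order all_algebra all_fingroup all_solvable all_field all_character.
Set Implicit Arguments.
Unset Strict Implicit.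
Unset Printing Implicit Defensive.
Import GroupScope.

(* The intersection is taken inside G (empty intersection = G). *)
Local Open Scope ring_scope.
Definition Kgrp (gT : finGroupType) (G : {group gT}) : {set gT} :=
  if abelian G then G
  else (G :&: \bigcap_(i : Iirr G | ('Z(G) \proper cfcenter 'chi[G]_i)%g)
          cfker 'chi[G]_i)%g.

(* Main.v *)
Require Import Defs.
From mathcomp Require Import all_boot all_order all_algebra all_fingroup all_solvable all_field all_character.
Import GroupScope.

Lemma ZG_sub_cfcenter (gT : finGroupType) (G : {group gT}) (i : Iirr G) :
  'Z(G) \subset 'Z(('chi[G]_i)%R)%CF.
Proof. by rewrite -cap_cfcenter_irr (bigcap_inf i). Qed.

Lemma Zpre_sub_cfcenter {gT : finGroupType} {G N : {group gT}} {i : Iirr G} :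
  N <| G -> N \subset cfker ('chi[G]_i)%R ->
  coset N @*^-1 'Z(G / N) \subset 'Z(('chi[G]_i)%R)%CF.
Proof.
move=> nNG sNK.
set K := cfker ('chi[G]_i)%R.
have nKG : G \subset 'N(K) by rewrite normal_norm // cfker_normal.
have sZnG : coset N @*^-1 'Z(G / N) \subset G.
  rewrite -{2}(quotientGK nNG); exact: morphpreS (center_sub _).
have nZK := subset_trans sZnG nKG.
have [sKZ _] := andP (cfker_center_normal ('chi[G]_i)%R).
rewrite -(quotientSGK nZK sKZ) cfcenter_eq_center.
rewrite subsetI quotientS //=.
apply: quotient_cents2r.
apply: subset_trans sNK.
rewrite -quotient_cents2 ?(normal_norm nNG) //.
  by rewrite cosetpreK subIset // subxx orbT.
exact: subset_trans sZnG (normal_norm nNG).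
Qed.

Lemma cap_ker_sub {gT : finGroupType} {G N : {group gT}} :
  N <| G ->
  G :&: \bigcap_(i : Iirr G | N \subset cfker ('chi[G]_i)%R) cfker ('chi[G]_i)%R
    \subset N.
Proof.
move=> nNG; apply/subsetP=> x /setIP[Gx /bigcapP Hx].
have nNx : x \in 'N(N) by apply: (subsetP (normal_norm nNG)).
apply: coset_idr => //.
have : coset N x \in (1 : {set coset_of N}).
  rewrite -(TI_cfker_irr (G / N)); apply/bigcapP=> j _.
  have := Hx (mod_Iirr j); rewrite mod_IirrE // => /(_ (cfker_mod _ nNG)).
  rewrite cfker_morph; last exact: normal_norm nNG.
  move=> /setIP[_].
  by move=> /morphpreP[].
by move/set1P.
Qed.

Theorem theoremA (gT : finGroupType) (G N : {group gT}) :
  ~~ abelian G -> N <| G ->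
  Kgrp G \subset N \/ (N \subset 'Z(G) /\ 'Z(G / N) = 'Z(G) / N).
Proof.
move=> nabG nNG.
have nNG' := normal_norm nNG.
have sZZn : 'Z(G) \subset coset N @*^-1 'Z(G / N).
  rewrite -sub_quotient_pre; last exact: subset_trans (center_sub G) nNG'.
  rewrite subsetI quotientS ?center_sub //=.
  by apply: quotient_cents; rewrite subIset // subxx orbT.
have [prop | nprop] := boolP ('Z(G) \proper coset N @*^-1 'Z(G / N)).
  left; rewrite /Kgrp (negbTE nabG).
  apply: (subset_trans _ (cap_ker_sub nNG)).
  rewrite setIS //; apply/bigcapsP=> i sNK.
  apply: bigcap_inf.
  exact: proper_sub_trans prop (Zpre_sub_cfcenter nNG sNK).
right.
have eqZ : coset N @*^-1 'Z(G / N) = 'Z(G).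
  apply/eqP; rewrite eqEsubset sZZn andbT.
  by move: nprop; rewrite properE sZZn /= negbK.
by rewrite -eqZ cosetpreK; split => //; apply: sub_cosetpre.
Qed.
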